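(* Let $R$ be a finite commutative Frobenius ring of characteristic $2$, let $G=\{g_1,\dots,g_n\}$ be a finite group of order $n$ with a fixed listing of its elements, let $v_1\neq v_2$ be elements of the group ring $RG$, and let $A$ be an $n\times n$ reverse circulant matrix over $R$. Let $C_\sigma$ be the code over $R$ generated by the $2n\times 4n$ matrix $$M(\sigma)=\left(\, I_{2n} \;\middle|\; \begin{matrix} \sigma(v_1) & \sigma(v_2)+A\\ \sigma(v_2)+A & \sigma(v_1)\end{matrix}\,\right).$$ Then $C_\sigma$ is a self-dual code of length $4n$ if and only if $$(\sigma(v_1+v_2)+A)(\sigma((v_1+v_2)^* )+A)=I_n \quad\text{and}\quad \sigma(v_1)(\sigma((v_1+v_2)^* )+A)=(\sigma(v_1+v_2)+A)\sigma(v_1^* ).$$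
   Context: For $v=\sum_{g\in G}\alpha_g g\in RG$, $\sigma(v)$ is the $n\times n$ matrix over $R$ whose $(i,j)$ entry is $\alpha_{g_i^{-1}g_j}$. The canonical involution is $v^*=\sum_{g}\alpha_g g^{-1}$. An $n\times n$ matrix $(a_{ij})$ is reverse circulant if $a_{ij}$ depends only on $(i+j)\bmod n$. A code is the $R$-submodule of $R^{4n}$ spanned by the rows of the generator matrix; it is self-dual if it equals its dual with respect to the Euclidean inner product $\langle x,y\rangle=\sum_i x_iy_i$. *)

(* Defs.v *)
From HB Require Import structures.
From mathcomp Require Import all_boot all_order all_algebra all_fingroup.
From mathcomp Require Import algC.
Set Implicit Arguments. Unset Strict Implicit. Unset Printing Implicit Defensive.
Import GRing.Theory Num.Theory.
Local Open Scope ring_scope.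

(* Frobenius ring (finite commutative case), via a generating character
   (Wood): an additive character chi : (R,+) -> C^* whose kernel contains
   no nonzero ideal. Since R is commutative, every nonzero ideal contains
   a nonzero principal ideal R a, so the condition is: for every a != 0
   there is r with chi (r * a) != 1. Characters take values in algC. *)
Definition generating_character (R : finComNzRingType) (chi : R -> algC) : Prop :=
  [/\ forall x : R, chi x != 0,
      forall x y : R, chi (x + y) = chi x * chi y
    & forall a : R, a != 0 -> exists r : R, chi (r * a) != 1].

Definition frobenius_ring (R : finComNzRingType) : Prop :=
  exists chi : R -> algC, generating_character chi.

(* Group ring RG: elements sum_g alpha_g g represented by g |-> alpha_g. *)
Definition group_ring (R : Type) (gT : finGroupType) := {ffun gT -> R}.

Definition gr_star (R : Type) (gT : finGroupType) (v : {ffun gT -> R})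
  : {ffun gT -> R} := [ffun g => v (g^-1)%g].

Definition sigma (R : Type) (gT : finGroupType) (n : nat) (e : 'I_n -> gT)
  (v : {ffun gT -> R}) : 'M[R]_n :=
  \matrix_(i < n, j < n) v ((e i)^-1 * e j)%g.

Definition reverse_circulant (R : Type) (n : nat) (A : 'M[R]_n) : Prop :=
  forall i j k l : 'I_n, ((i + j) %% n = (k + l) %% n)%N -> A i j = A k l.

Definition code_gen (R : comNzRingType) (k m : nat) (M : 'M[R]_(k, m))
  (x : 'rV[R]_m) : Prop := exists u : 'rV[R]_k, x = u *m M.

Definition euclid_ip (R : comNzRingType) (m : nat) (x y : 'rV[R]_m) : R :=
  \sum_(i < m) x 0 i * y 0 i.

Definition dual_code (R : comNzRingType) (m : nat) (C : 'rV[R]_m -> Prop)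
  (x : 'rV[R]_m) : Prop := forall c, C c -> euclid_ip x c = 0.

Definition self_dual (R : comNzRingType) (m : nat) (C : 'rV[R]_m -> Prop) : Prop :=
  forall x, C x <-> dual_code C x.

Definition Msigma (R : comNzRingType) (gT : finGroupType) (n : nat)
  (e : 'I_n -> gT) (v1 v2 : {ffun gT -> R}) (A : 'M[R]_n)
  : 'M[R]_(n + n, (n + n) + (n + n)) :=
  row_mx 1%:M (block_mx (sigma e v1) (sigma e v2 + A)
                        (sigma e v2 + A) (sigma e v1)).

(* Main.v *)
Require Import Defs.
From HB Require Import structures.
From mathcomp Require Import all_boot all_order all_algebra all_fingroup.
From mathcomp Require Import algC.
Import GRing.Theory.
Local Open Scope ring_scope.

Section Aux.
Variable R : comNzRingType.

Lemma ip_mx m (x y : 'rV[R]_m) : euclid_ip x y = (x *m y^T) 0 0.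
Proof. by rewrite /euclid_ip !mxE; apply: eq_bigr => i _; rewrite !mxE. Qed.

Lemma rv_zero k (w : 'rV[R]_k) :
  (forall u : 'rV[R]_k, (w *m u^T) 0 0 = 0) -> w = 0.
Proof.
move=> H; apply/rowP => i; rewrite mxE.
have := H (delta_mx 0 i); rewrite mxE (bigD1 i) //= big1 ?addr0.
  by rewrite !mxE !eqxx mulr1.
by move=> j /negPf ji; rewrite !mxE ji andbF mulr0.
Qed.

Lemma code_char k (B : 'M[R]_k) :
  self_dual (code_gen (row_mx 1%:M B)) <-> B *m B^T = - 1%:M.
Proof.
set M := row_mx 1%:M B.
have MMT : M *m M^T = 1%:M + B *m B^T.
  by rewrite /M tr_row_mx mul_row_col trmx1 mulmx1.
have ipC u u' : euclid_ip (u *m M) (u' *m M) = (u *m (M *m M^T) *m u'^T) 0 0.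
  by rewrite ip_mx trmx_mul !mulmxA.
split.
- move=> H.
  have : M *m M^T = 0.
    apply/matrixP => i j; rewrite [RHS]mxE.
    have := (proj1 (H (delta_mx 0 i *m M)) (ex_intro _ _ erefl)) 
              (delta_mx 0 j *m M) (ex_intro _ _ erefl).
    rewrite ipC => <-.
    by rewrite -rowE trmx_delta -colE !mxE.
  by rewrite MMT => /eqP; rewrite addrC addr_eq0 => /eqP.
- move=> BB x; split.
  + move=> [u ->] c [u' ->]; rewrite ipC MMT BB subrr mulmx0 mul0mx mxE //.
  + move=> Hd.
    have hx : x *m M^T = 0.
      apply: rv_zero => u.
      have := Hd (u *m M) (ex_intro _ _ erefl).
      by rewrite ip_mx trmx_mul mulmxA.
    have BTB : B^T *m B = - 1%:M.
      apply/eqP; rewrite -eqr_opp opprK -mulNmx; apply/eqP; apply: mulmx1C.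
      by rewrite mulmxN BB opprK.
    rewrite -(hsubmxK x) /M tr_row_mx mul_row_col trmx1 mulmx1 in hx.
    exists (lsubmx x).
    have hL : lsubmx x = - (rsubmx x *m B^T).
      by apply/eqP; rewrite -addr_eq0 hx.
    rewrite /M mul_mx_row mulmx1 {2}hL mulNmx -mulmxA BTB mulmxN mulmx1 opprK.
    by rewrite hsubmxK.
Qed.
Lemma expand2 n (X Y : 'M[R]_n) :
  (X + Y) *m (X^T + Y^T) = (X *m X^T + Y *m Y^T) + (X *m Y^T + Y *m X^T).
Proof.
by rewrite mulmxDl !mulmxDr [X in _ + X]addrC addrACA [X in _ + X]addrC.
Qed.
End Aux.

Theorem mainTheorem2 (R : finComNzRingType) (gT : finGroupType) (n : nat)
  (e : 'I_n -> gT) (v1 v2 : {ffun gT -> R}) (A : 'M[R]_n) :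
  frobenius_ring R ->
  (2%:R : R) = 0 ->
  bijective e ->
  v1 != v2 ->
  reverse_circulant A ->
  (self_dual (code_gen (Msigma e v1 v2 A)) <->
   ((sigma e (v1 + v2) + A) *m (sigma e (gr_star (v1 + v2)) + A) = 1%:M /\
    sigma e v1 *m (sigma e (gr_star (v1 + v2)) + A)
      = (sigma e (v1 + v2) + A) *m sigma e (gr_star v1))).
Proof.
move=> _ two _ _ rcA.
have sT v : sigma e (gr_star v) = (sigma e v)^T.
  by apply/matrixP => i j; rewrite !mxE ffunE invMg invgK.
have sD v w : sigma e (v + w) = sigma e v + sigma e w.
  by apply/matrixP => i j; rewrite !mxE ffunE.
have AT : A^T = A.
  by apply/matrixP => i j; rewrite mxE; apply: rcA; rewrite addnC.
have c2 m p (X : 'M[R]_(m, p)) : X + X = 0.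
  by apply/matrixP => i j; rewrite !mxE -mulr2n -mulr_natl two mul0r.
have oppE m p (X : 'M[R]_(m, p)) : - X = X.
  by apply/eqP; rewrite eq_sym -subr_eq0 opprK c2.
rewrite /Msigma. eapply iff_trans; first exact: code_char. rewrite oppE.
rewrite !sT !sD.
set S := sigma e v1; set T := sigma e v2 + A.
have -> : sigma e v1 + sigma e v2 + A = S + T by rewrite addrA.
have -> : (sigma e v1 + sigma e v2)^T + A = S^T + T^T.
  by rewrite /T !linearD /= AT addrA.
rewrite tr_block_mx mulmx_block (scalar_mx_block n n).
split.
- move/eq_block_mx => [h1 h2 _ _].
  have h3 : S *m T^T = T *m S^T.
    by apply/eqP; rewrite -subr_eq0 oppE h2.
  split.
    by rewrite mulmxDl !mulmxDr [X in _ + X]addrC addrACA h1 h2 addr0.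
  by rewrite mulmxDr mulmxDl h3 addrC.
- move=> [h1 h2].
  have h3 : S *m T^T = T *m S^T.
    by move: h2; rewrite mulmxDr mulmxDl => /addrI.
  have h4 : S *m S^T + T *m T^T = 1%:M.
    by move: h1; rewrite expand2 -h3 c2 addr0.
  by rewrite h3 c2 [T *m T^T + _]addrC h4.
Qed.
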